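(* Let $q$ be a prime power, $m>4$, $F=\mathbb F_q$, $V=\mathbb F_q^m$. Let $E\subset E_1$ be subspaces of $\bigwedge^2V$ with $\dim E_1=\dim E+1$, and assume $E$ is decomposable of dimension $r\ge1$ and $E_1$ is not decomposable. Then $E_1\setminus E$ contains at most $q^{r-1}(q-1)$ decomposable elements.
   Context: A nonzero $\omega\in\bigwedge^2V$ is decomposable if $\omega=u\wedge v$ for some $u,v\in V$; a subspace of $\bigwedge^2V$ is decomposable if all its nonzero elements are decomposable. *)

(* Defs.v *)
(* Λ²V for V = F^m is modelled by alternating m×m matrices,
   with u ∧ v ↦ u^T v - v^T u (row vectors u v : 'rV_m). *)
From HB Require Import structures.
From mathcomp Require Import all_boot all_order all_algebra all_field.
Set Implicit Arguments. Unset Strict Implicit. Unset Printing Implicit Defensive.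
Import GRing.Theory.
Local Open Scope ring_scope.

Section Wedge.
Variables (F : finFieldType) (m : nat).

Definition wedge (u v : 'rV[F]_m) : 'M[F]_m := u^T *m v - v^T *m u.

Definition alternating (A : 'M[F]_m) : bool :=
  (A^T == - A) && [forall i, A i i == 0].

Definition decomposable (w : 'M[F]_m) : bool :=
  (w != 0) && [exists u : 'rV[F]_m, exists v : 'rV[F]_m, w == wedge u v].

Definition decomposable_space (E : {vspace 'M[F]_m}) : Prop :=
  forall w, w \in E -> w != 0 -> decomposable w.

End Wedge.

(* Main.v *)
Require Import Defs.
From HB Require Import structures.
From mathcomp Require Import all_boot all_order all_algebra all_field.
From mathcomp Require Import ring.
Set Implicit Arguments. Unset Strict Implicit. Unset Printing Implicit Defensive.
Import GRing.Theory.
Local Open Scope ring_scope.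

Section Aux.
Variables (F : finFieldType) (m : nat).
Implicit Types A B : 'M[F]_m.

Definition pl A i j k l := A i j * A k l - A i k * A j l + A i l * A j k.
Definition bl A B i j k l :=
  A i j * B k l + B i j * A k l - (A i k * B j l + B i k * A j l)
  + (A i l * B j k + B i l * A j k).

Lemma plD A B i j k l : pl (A + B) i j k l = pl A i j k l + pl B i j k l + bl A B i j k l.
Proof. rewrite /pl /bl !mxE; ring. Qed.
Lemma plB A B i j k l : pl (A - B) i j k l = pl A i j k l + pl B i j k l - bl A B i j k l.
Proof. rewrite /pl /bl !mxE; ring. Qed.
Lemma plZ c A i j k l : pl (c *: A) i j k l = c ^+ 2 * pl A i j k l.
Proof. rewrite /pl !mxE; ring. Qed.
Lemma pl0 i j k l : pl (0 : 'M[F]_m) i j k l = 0.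
Proof. rewrite /pl !mxE; ring. Qed.
Lemma blDl A A' B i j k l : bl (A + A') B i j k l = bl A B i j k l + bl A' B i j k l.
Proof. rewrite /bl !mxE; ring. Qed.
Lemma blZl c A B i j k l : bl (c *: A) B i j k l = c * bl A B i j k l.
Proof. rewrite /bl !mxE; ring. Qed.
Lemma bl0l B i j k l : bl 0 B i j k l = 0.
Proof. rewrite /bl !mxE; ring. Qed.
Lemma blC A B i j k l : bl A B i j k l = bl B A i j k l.
Proof. rewrite /bl; ring. Qed.

Lemma wedgeE (u v : 'rV[F]_m) i j : wedge u v i j = u 0 i * v 0 j - v 0 i * u 0 j.
Proof. by rewrite /wedge !mxE !big_ord1 !mxE. Qed.

Lemma decomp_pl A : decomposable A -> forall i j k l, pl A i j k l = 0.
Proof.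
case/andP=> _ /existsP[u /existsP[v /eqP->]] i j k l.
rewrite /pl !wedgeE; ring.
Qed.

Lemma pl_decomp A : A != 0 -> (forall i j k l, pl A i j k l = 0) -> decomposable A.
Proof.
move=> An0 H; rewrite /decomposable An0 /=.
case: (pickP (fun p : 'I_m * 'I_m => A p.1 p.2 != 0)) => [[a b] /= Hab | H0]; last first.
  case/negP: An0; apply/eqP/matrixP => i j; move/negbFE: (H0 (i, j)) => /eqP.
  by rewrite mxE.
apply/existsP; exists ((A a b)^-1 *: row a A); apply/existsP; exists (row b A).
apply/eqP/matrixP => i j; rewrite wedgeE !mxE.
have H1 : A a b * A i j = A a i * A b j - A a j * A b i.
  by apply/eqP; rewrite -subr_eq0 -(H a b i j); apply/eqP; rewrite /pl; ring.
apply: (mulfI Hab); rewrite H1; field; exact: Hab.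
Qed.

Lemma decompZ c A : c != 0 -> decomposable A -> decomposable (c *: A).
Proof.
move=> cn0 dA; apply: pl_decomp.
  by rewrite scaler_eq0 negb_or cn0; case/andP: dA.
by move=> i j k l; rewrite plZ (decomp_pl dA) mulr0.
Qed.

Lemma span_indP (vT : vectType F) (P : vT -> Prop) (X : seq vT) :
  P 0 -> (forall x y, P x -> P y -> P (x + y)) -> (forall c x, P x -> P (c *: x)) ->
  (forall x, x \in X -> P x) -> forall x, x \in <<X>>%VS -> P x.
Proof.
move=> P0 PD PZ PX x /(@coord_span _ _ _ (in_tuple X)) ->.
apply: big_ind => // i _; apply: PZ; apply: PX; apply: mem_nth.
exact: ltn_ord.
Qed.

End Aux.
Theorem lemma6p4 (F : finFieldType) (m : nat) (E E1 : {vspace 'M[F]_m}) :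
  (4 < m)%N ->
  (forall w, w \in E1 -> alternating w) ->
  (E <= E1)%VS ->
  \dim E1 = (\dim E).+1 ->
  (1 <= \dim E)%N ->
  decomposable_space E ->
  ~ decomposable_space E1 ->
  (#|[set w : 'M[F]_m | (w \in E1) && (w \notin E) && decomposable w]|
     <= #|F| ^ (\dim E).-1 * #|F|.-1)%N.
Proof.
move=> _ _ EE1 dimE1 dimE1' decE ndecE1.
have [w0 [w0E1 [w0n0 ndw0]]] : exists w0, w0 \in E1 /\ w0 != 0 /\ ~~ decomposable w0.
  case: (boolP [exists w, (w \in E1) && (w != 0) && ~~ decomposable w]).
    by case/existsP => w /andP[/andP[? ?] ?]; exists w.
  move/existsPn => H; exfalso; apply: ndecE1 => w wE1 wn0.
  by have := H w; rewrite wE1 wn0 /= negbK.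
have w0nE : w0 \notin E.
  by apply/negP => /decE /(_ w0n0) dw; rewrite dw in ndw0.
have E1eq : E1 = (E + <[w0]>)%VS.
  apply/eqP; rewrite eq_sym eqEdim subv_add EE1 -memvE w0E1 /= dimE1.
  rewrite (ltn_leqif (dimv_leqif_eq (addvSl E <[w0]>))).
  apply/negP => /eqP h; move: w0nE; rewrite h.
  by have := memv_add (mem0v E) (memv_line w0); rewrite add0r => ->.
set S' := [set e : 'M[F]_m | (e \in E) && decomposable (w0 + e)].
have stepA : (#|[set w : 'M[F]_m | (w \in E1) && (w \notin E) && decomposable w]|
                <= #|F|.-1 * #|S'|)%N.
  have sub : [set w : 'M[F]_m | (w \in E1) && (w \notin E) && decomposable w]
     \subset (fun p : F * 'M[F]_m => p.1 *: (w0 + p.2)) @: setX [set c : F | c != 0] S'.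
    apply/subsetP => w; rewrite inE => /andP[/andP[wE1 wnE] dw].
    move: wE1; rewrite E1eq => /memv_addP[e eE [v /vlineP[c vE] wE]]; subst v w.
    have cn0 : c != 0.
      by apply/eqP => c0; move: wnE; rewrite c0 scale0r addr0 eE.
    have eq1 : e + c *: w0 = c *: (w0 + c^-1 *: e).
      by rewrite scalerDr scalerA mulfV // scale1r addrC.
    apply/imsetP; exists (c, c^-1 *: e) => //.
    rewrite !inE /= cn0 memvZ //=.
    have -> : w0 + c^-1 *: e = c^-1 *: (e + c *: w0) by rewrite eq1 scalerA mulVf // scale1r.
    by apply: decompZ; rewrite ?invr_eq0.
  apply: (leq_trans (subset_leq_card sub)); apply: (leq_trans (leq_imset_card _ _)).
  rewrite cardsX; apply: leq_mul => //.
  have -> : [set c : F | c != 0] = [set~ 0] by apply/setP => c; rewrite !inE.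
  by rewrite cardsC1.
have stepB : (#|S'| <= #|F| ^ (\dim E).-1)%N.
  case: (set_0Vmem S') => [-> | [e0 e0S]]; first by rewrite cards0.
  move: (e0S); rewrite inE => /andP[e0E de0].
  pose G := [seq w0 + e | e <- enum S'].
  pose L := (<<G>>)%VS.
  have Gin : forall e, e \in S' -> w0 + e \in G.
    by move=> e eS; apply: map_f; rewrite mem_enum.
  have Gpl : forall g, g \in G -> forall i j k l, pl g i j k l = 0.
    move=> g /mapP[e]; rewrite mem_enum inE => /andP[_ de] ->; exact: decomp_pl.
  have Gbl : forall g h, g \in G -> h \in G -> forall i j k l, bl g h i j k l = 0.
    move=> g h gG hG i j k l.
    have : pl (g - h) i j k l = 0.
      move: gG hG => /mapP[e]; rewrite mem_enum inE => /andP[eE _] ->.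
      move=> /mapP[e']; rewrite mem_enum inE => /andP[e'E _] ->.
      have -> : w0 + e - (w0 + e') = e - e' by rewrite opprD addrACA subrr add0r.
      have [->|nz] := eqVneq (e - e') 0; first by rewrite pl0.
      by apply: decomp_pl; apply: decE => //; rewrite rpredB.
    by rewrite plB (Gpl g gG) (Gpl h hG) add0r sub0r => /eqP; rewrite oppr_eq0 => /eqP.
  have Lbl1 : forall y, y \in G -> forall x, x \in L -> forall i j k l, bl x y i j k l = 0.
    move=> y yG; apply: span_indP.
    - by move=> i j k l; rewrite bl0l.
    - by move=> x z Hx Hz i j k l; rewrite blDl Hx Hz addr0.
    - by move=> c x Hx i j k l; rewrite blZl Hx mulr0.
    - by move=> x xG; exact: Gbl.
  have Lbl : forall x, x \in L -> forall y, y \in L -> forall i j k l, bl x y i j k l = 0.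
    move=> x xL; apply: span_indP.
    - by move=> i j k l; rewrite blC bl0l.
    - by move=> y z Hy Hz i j k l; rewrite blC blDl -!(blC x) Hy Hz addr0.
    - by move=> c y Hy i j k l; rewrite blC blZl blC Hy mulr0.
    - by move=> y yG i j k l; exact: Lbl1.
  have Lpl : forall x, x \in L -> forall i j k l, pl x i j k l = 0.
    move=> x xL.
    suff: x \in L /\ forall i j k l, pl x i j k l = 0 by case.
    move: x xL; apply: span_indP.
    - by split; [exact: mem0v | move=> i j k l; rewrite pl0].
    - move=> x z [xL Hx] [zL Hz]; split; first by rewrite rpredD.
      by move=> i j k l; rewrite plD Hx Hz (Lbl x xL z zL) !add0r.
    - move=> c x [xL Hx]; split; first by rewrite memvZ.
      by move=> i j k l; rewrite plZ Hx mulr0.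
    - move=> x xG; split; [exact: memv_span | exact: Gpl].
  pose D := (L :&: E)%VS.
  have cardS : (#|S'| <= #|D|)%N.
    rewrite -(card_imset _ (addIr (- e0))).
    apply: subset_leq_card; apply/subsetP => x /imsetP[e eS ->].
    move: (eS); rewrite inE => /andP[eE _].
    rewrite memv_cap (rpredB eE e0E) andbT.
    have -> : e - e0 = (w0 + e) - (w0 + e0) by rewrite opprD addrACA subrr add0r.
    by rewrite rpredB // memv_span // Gin.
  apply: (leq_trans cardS); rewrite card_vspace.
  have q0 : (0 < #|F|)%N by apply/card_gt0P; exists 0.
  apply: leq_pexp2l => //.
  have : (\dim D < \dim E)%N.
    rewrite ltnNge; apply/negP => le.
    have DE : D = E by apply/eqP; rewrite eqEdim capvSr le.
    have EL : (E <= L)%VS by rewrite -DE capvSl.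
    have w0L : w0 \in L.
      have -> : w0 = (w0 + e0) - e0 by rewrite addrK.
      by apply: rpredB; [apply: memv_span; apply: Gin | apply: (subvP EL)].
    by move: ndw0; rewrite (pl_decomp w0n0 (Lpl w0 w0L)).
  by case: (\dim E) => // n; rewrite ltnS.
rewrite mulnC; apply: (leq_trans stepA); exact: leq_mul.
Qed.
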